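(* Let $T$ be a non-empty compact Hausdorff space and $M$ a pseudo MV-algebra. The kernel of a $(C(T),1_T)$-state-morphism $s$ on $M$ is a maximal ideal of $M$ if and only if there is a state-morphism $s_0$ on $M$ such that $s(x)=s_0(x)1_T$ for all $x\in M$. The same statement holds with $C(T)$ replaced by $C_b(T)$, the Riesz space of bounded real-valued functions on $T$.
   Context: $C(T)$ is the Riesz space of continuous real-valued functions on $T$ with pointwise order; $1_T$ is the constant function $1$. Pseudo MV-algebra: an algebra $(M;\oplus,{}^-,{}^\sim,0,1)$, $0\neq1$, satisfying the standard pseudo MV-algebra axioms; equivalently (up to isomorphism) $M=\Gamma(G,u)=[0,u]$ for a unital $\ell$-group $(G,u)$ with $x\oplus y=(x+y)\wedge u$, $x^-=u-x$, $x^\sim=-x+u$. Ideal: nonempty down-set closed under $\oplus$; maximal = maximal among proper ideals. For a unital Riesz space $(R,1_R)$, $\Gamma(R,1_R)$ is the MV-algebra on $[0,1_R]$, and an $(R,1_R)$-state-morphism is a pseudo MV-algebra homomorphism $M\to\Gamma(R,1_R)$; a state-morphism is an $(\mathbb R,1)$-state-morphism. $\mathrm{Ker}(s)=\{x:s(x)=0\}$. *)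

(* Defs.v *)
From Stdlib Require Import Reals List.
Open Scope R_scope.

Record TopSpace := {
  pt :> Type;
  is_open : (pt -> Prop) -> Prop;
  open_full : is_open (fun _ => True);
  open_inter : forall U V, is_open U -> is_open V -> is_open (fun x => U x /\ V x);
  open_union : forall F : (pt -> Prop) -> Prop,
      (forall U, F U -> is_open U) -> is_open (fun x => exists U, F U /\ U x)
}.

Definition compact_space (T : TopSpace) : Prop :=
  forall F : (T -> Prop) -> Prop,
    (forall U, F U -> is_open T U) ->
    (forall x : T, exists U, F U /\ U x) ->
    exists l : list (T -> Prop),
      (forall U, In U l -> F U) /\ (forall x : T, exists U, In U l /\ U x).

Definition hausdorff_space (T : TopSpace) : Prop :=
  forall x y : T, x <> y -> exists U V, is_open T U /\ is_open T V /\ U x /\ V y /\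
    (forall z, ~ (U z /\ V z)).

Definition R_open (W : R -> Prop) : Prop :=
  forall r, W r -> exists eps, eps > 0 /\ forall r', Rabs (r' - r) < eps -> W r'.

Definition continuous_on (T : TopSpace) (f : T -> R) : Prop :=
  forall W, R_open W -> is_open T (fun t => W (f t)).

Definition bounded_fun (T : Type) (f : T -> R) : Prop :=
  exists K, forall t, Rabs (f t) <= K.

Record PseudoMV := {
  carr :> Type;
  pmv_oplus : carr -> carr -> carr;
  pmv_neg : carr -> carr;
  pmv_tilde : carr -> carr;
  pmv_zero : carr;
  pmv_one : carr;
  pmv_nontriv : pmv_zero <> pmv_one;
  pmv_A1 : forall x y z, pmv_oplus x (pmv_oplus y z) = pmv_oplus (pmv_oplus x y) z;
  pmv_A2 : forall x, pmv_oplus x pmv_zero = x /\ pmv_oplus pmv_zero x = x;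
  pmv_A3 : forall x, pmv_oplus x pmv_one = pmv_one /\ pmv_oplus pmv_one x = pmv_one;
  pmv_A4 : pmv_tilde pmv_one = pmv_zero /\ pmv_neg pmv_one = pmv_zero;
  pmv_A5 : forall x y, pmv_tilde (pmv_oplus (pmv_neg x) (pmv_neg y))
                     = pmv_neg (pmv_oplus (pmv_tilde x) (pmv_tilde y));
  pmv_A6 : forall x y,
    let odot := fun a b => pmv_tilde (pmv_oplus (pmv_neg a) (pmv_neg b)) in
    pmv_oplus x (odot (pmv_tilde x) y) = pmv_oplus y (odot (pmv_tilde y) x) /\
    pmv_oplus y (odot (pmv_tilde y) x) = pmv_oplus (odot x (pmv_neg y)) y /\
    pmv_oplus (odot x (pmv_neg y)) y = pmv_oplus (odot y (pmv_neg x)) x;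
  pmv_A7 : forall x y,
    let odot := fun a b => pmv_tilde (pmv_oplus (pmv_neg a) (pmv_neg b)) in
    odot x (pmv_oplus (pmv_neg x) y) = odot (pmv_oplus x (pmv_tilde y)) y;
  pmv_A8 : forall x, pmv_tilde (pmv_neg x) = x
}.

Arguments pmv_oplus {_}. Arguments pmv_neg {_}. Arguments pmv_tilde {_}.
Arguments pmv_zero {_}. Arguments pmv_one {_}.

Definition pmv_le (M : PseudoMV) (x y : M) : Prop := pmv_oplus (pmv_neg x) y = pmv_one.

Definition is_ideal (M : PseudoMV) (I : M -> Prop) : Prop :=
  (exists x, I x) /\
  (forall x y, pmv_le M x y -> I y -> I x) /\
  (forall x y, I x -> I y -> I (pmv_oplus x y)).

Definition is_maximal_ideal (M : PseudoMV) (I : M -> Prop) : Prop :=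
  is_ideal M I /\ (exists x, ~ I x) /\
  (forall J, is_ideal M J -> (exists x, ~ J x) -> (forall x, I x -> J x) ->
     forall x, J x -> I x).

(* pseudo MV-algebra homomorphism M -> Gamma(R,1) = [0,1] with
   x (+) y = min(x+y,1), x^- = x^~ = 1 - x *)
Definition is_state_morphism (M : PseudoMV) (s : M -> R) : Prop :=
  (forall x, 0 <= s x <= 1) /\
  (forall x y, s (pmv_oplus x y) = Rmin (s x + s y) 1) /\
  (forall x, s (pmv_neg x) = 1 - s x) /\
  (forall x, s (pmv_tilde x) = 1 - s x) /\
  s pmv_zero = 0 /\ s pmv_one = 1.

(* (R_T, 1_T)-state-morphism, where R_T is a Riesz space of real functions on T
   described by the membership predicate [inR]; Gamma(R_T,1_T) consists of
   the f in R_T with 0 <= f <= 1_T, operations pointwise. *)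
Definition is_fun_state_morphism (T : Type) (inR : (T -> R) -> Prop)
    (M : PseudoMV) (s : M -> T -> R) : Prop :=
  (forall x, inR (s x) /\ forall t, 0 <= s x t <= 1) /\
  (forall x y t, s (pmv_oplus x y) t = Rmin (s x t + s y t) 1) /\
  (forall x t, s (pmv_neg x) t = 1 - s x t) /\
  (forall x t, s (pmv_tilde x) t = 1 - s x t) /\
  (forall t, s pmv_zero t = 0) /\ (forall t, s pmv_one t = 1).

Definition is_CT_state_morphism (T : TopSpace) (M : PseudoMV) (s : M -> T -> R) :=
  is_fun_state_morphism T (continuous_on T) M s.

Definition is_CbT_state_morphism (T : TopSpace) (M : PseudoMV) (s : M -> T -> R) :=
  is_fun_state_morphism T (bounded_fun T) M s.

Definition Ker_fun (T : Type) (M : PseudoMV) (s : M -> T -> R) : M -> Prop :=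
  fun x => s x = (fun _ => 0).

(* Main.v *)
Require Import Defs.
From Stdlib Require Import Reals List.
From Stdlib Require Import Lra FunctionalExtensionality Classical.
Open Scope R_scope.

Lemma neg_oplus_one (M : PseudoMV) (y : M) : pmv_oplus (pmv_neg y) y = pmv_one.
Proof.
  pose proof (pmv_A6 M pmv_one y) as H. cbv zeta in H. destruct H as [H1 [H2 _]].
  rewrite (proj2 (pmv_A4 M)) in H1, H2. rewrite (proj2 (pmv_A2 M _)) in H2.
  rewrite (pmv_A8 M) in H2. rewrite (proj1 (pmv_A2 M _)) in H1, H2.
  rewrite <- H2, <- H1. apply (proj2 (pmv_A3 M _)).
Qed.

Definition od (M : PseudoMV) (x y : M) : M :=
  pmv_tilde (pmv_oplus (pmv_neg x) (pmv_neg y)).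

Lemma sm_od (M : PseudoMV) s (x : M) : is_state_morphism M s ->
  s (od M x x) = Rmax (2 * s x - 1) 0.
Proof.
  intros (H0 & Ho & Hn & Ht & _). unfold od. rewrite Ht, Ho, !Hn.
  specialize (H0 x). unfold Rmin, Rmax; repeat destruct Rle_dec; lra.
Qed.

Lemma sm_oo (M : PseudoMV) s (x : M) : is_state_morphism M s ->
  s (pmv_oplus x x) = Rmin (2 * s x) 1.
Proof.
  intros (H0 & Ho & _). rewrite Ho. replace (2 * s x) with (s x + s x) by ring; reflexivity.
Qed.

Lemma pow2_ge n : 2 ^ n >= INR n + 1.
Proof.
  induction n. simpl; lra. rewrite S_INR. simpl. pose proof (pos_INR n). lra.
Qed.

Lemma sm_core (M : PseudoMV) s1 s2 : is_state_morphism M s1 -> is_state_morphism M s2 ->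
  (forall z, s1 z = 0 <-> s2 z = 0) ->
  forall n (x : M), s1 x < s2 x -> (s2 x - s1 x) * 2 ^ n > 1 -> False.
Proof.
  intros H1 H2 Hk n. induction n; intros x Hlt Hd.
  - simpl in Hd. destruct H1 as [B1 _]. destruct H2 as [B2 _].
    specialize (B1 x); specialize (B2 x); lra.
  - pose proof (proj1 H1 x) as B1. pose proof (proj1 H2 x) as B2.
    simpl in Hd.
    destruct (Rle_dec (s1 x) (1/2)) as [Ha|Ha].
    + destruct (Rle_dec (s2 x) (1/2)) as [Hb|Hb].
      * apply (IHn (pmv_oplus x x)); rewrite (sm_oo _ _ _ H1), (sm_oo _ _ _ H2);
        unfold Rmin; repeat destruct Rle_dec; nra.
      * assert (E : s1 (od M x x) = 0) by (rewrite (sm_od _ _ _ H1); unfold Rmax; destruct Rle_dec; lra).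
        apply Hk in E. rewrite (sm_od _ _ _ H2) in E. unfold Rmax in E; destruct Rle_dec in E; lra.
    + apply (IHn (od M x x)); rewrite (sm_od _ _ _ H1), (sm_od _ _ _ H2);
        unfold Rmax; repeat destruct Rle_dec; nra.
Qed.

Lemma sm_unique (M : PseudoMV) s1 s2 : is_state_morphism M s1 -> is_state_morphism M s2 ->
  (forall z, s1 z = 0 <-> s2 z = 0) -> forall x, s1 x = s2 x.
Proof.
  intros H1 H2 Hk x.
  assert (G : forall a b : M -> R, is_state_morphism M a -> is_state_morphism M b ->
     (forall z, a z = 0 <-> b z = 0) -> a x < b x -> False).
  { intros a b Ha Hb Hab Hlt.
    destruct (INR_unbounded (/ (b x - a x))) as [n Hn].
    pose proof (pow2_ge n).
    apply (sm_core M a b Ha Hb Hab n x Hlt).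
    assert (0 < b x - a x) by lra.
    assert (/ (b x - a x) < 2 ^ n) by lra.
    apply (Rmult_lt_compat_l (b x - a x)) in H3; auto.
    rewrite Rinv_r in H3; lra. }
  destruct (Rtotal_order (s1 x) (s2 x)) as [L|[E|L]]; auto.
  - exfalso; exact (G s1 s2 H1 H2 Hk L).
  - exfalso; apply (G s2 s1); auto. intro z; split; apply Hk.
Qed.

Fixpoint nx (M : PseudoMV) (x : M) (n : nat) : M :=
  match n with O => x | S k => pmv_oplus (nx M x k) x end.

Lemma sm_nx (M : PseudoMV) s (x : M) : is_state_morphism M s -> forall n,
  s (nx M x n) = Rmin (INR (S n) * s x) 1.
Proof.
  intros Hs. pose proof (proj1 Hs x) as B. induction n.
  - simpl. unfold Rmin; destruct Rle_dec; lra.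
  - simpl nx. rewrite (proj1 (proj2 Hs)), IHn. rewrite (S_INR (S n)).
    unfold Rmin; repeat destruct Rle_dec; nra.
Qed.

Lemma ker_max (M : PseudoMV) s0 (I : M -> Prop) : is_state_morphism M s0 ->
  (forall x, I x <-> s0 x = 0) -> is_maximal_ideal M I.
Proof.
  intros Hs HI. pose proof Hs as (B & Ho & Hn & Ht & Z & O).
  assert (Hid : is_ideal M I).
  { split; [|split].
    - exists pmv_zero. apply HI; auto.
    - intros x y Hle Hy. apply HI. apply HI in Hy. unfold pmv_le in Hle.
      apply (f_equal s0) in Hle. rewrite Ho, Hn, O in Hle.
      specialize (B x). unfold Rmin in Hle; destruct Rle_dec in Hle; lra.
    - intros x y Hx Hy. apply HI in Hx; apply HI in Hy. apply HI.
      rewrite Ho, Hx, Hy. unfold Rmin; destruct Rle_dec; lra. }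
  split; [exact Hid|split].
  - exists pmv_one. intro H. apply HI in H. lra.
  - intros J HJ [w Hw] Hsub x Jx. apply HI.
    destruct HJ as (_ & Hdown & Hplus).
    destruct (Req_dec (s0 x) 0) as [E|E]; auto. exfalso.
    pose proof (B x) as Bx.
    destruct (INR_unbounded (/ s0 x)) as [n Hn0].
    assert (Jn : forall k, J (nx M x k)).
    { induction k; simpl; auto. }
    assert (S1 : s0 (nx M x n) = 1).
    { rewrite (sm_nx _ _ _ Hs). rewrite S_INR.
      assert (0 < s0 x) by lra.
      assert (1 < INR n * s0 x).
      { apply (Rmult_lt_compat_l (s0 x)) in Hn0; auto. rewrite Rinv_r in Hn0; lra. }
      unfold Rmin; destruct Rle_dec; nra. }
    assert (Jneg : J (pmv_neg (nx M x n))).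
    { apply Hsub, HI. rewrite Hn, S1. lra. }
    assert (J1 : J pmv_one).
    { rewrite <- (neg_oplus_one M (nx M x n)). apply Hplus; auto. }
    apply Hw. apply (Hdown w pmv_one); auto.
    unfold pmv_le. apply (proj1 (pmv_A3 M _)).
Qed.

Lemma main_gen (T : Type) (inR : (T -> R) -> Prop) (M : PseudoMV)
  (HTne : inhabited T) (s : M -> T -> R) : is_fun_state_morphism T inR M s ->
     (is_maximal_ideal M (Ker_fun T M s) <->
      exists s0 : M -> R, is_state_morphism M s0 /\
        forall x, s x = (fun _ => s0 x)).
Proof.
  intros Hs. destruct HTne as [t0].
  destruct Hs as (B & Ho & Hn & Ht & Z & O).
  assert (SMt : forall t, is_state_morphism M (fun z => s z t)).
  { intro t. repeat split; auto; apply B. }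
  split.
  - intros Hmax. exists (fun z => s z t0). split; auto.
    intro x. apply functional_extensionality. intro t.
    assert (Kt : forall t z, s z t = 0 <-> Ker_fun T M s z).
    { intros t1 z. split.
      - intro H0. destruct Hmax as (_ & _ & Hm).
        pose proof (ker_max M (fun z => s z t1) (fun z => s z t1 = 0) (SMt t1)
          (fun _ => iff_refl _)) as (HJ & Hp & _).
        apply (Hm (fun z => s z t1 = 0)); auto.
        intros y Hy. unfold Ker_fun in Hy. rewrite Hy. reflexivity.
      - intro H. unfold Ker_fun in H. rewrite H. reflexivity. }
    apply (sm_unique M (fun z => s z t) (fun z => s z t0)); auto.
    intro z. rewrite (Kt t z), (Kt t0 z). tauto.
  - intros [s0 [Hs0 Hx]]. apply (ker_max M s0); auto.
    intro x. unfold Ker_fun. rewrite Hx. split.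
    + intro H. apply (f_equal (fun f => f t0)) in H. exact H.
    + intro H. rewrite H. reflexivity.
Qed.

Theorem proposition3p21 (T : TopSpace) (M : PseudoMV)
  (HTne : inhabited (pt T)) (HTc : compact_space T) (HTh : hausdorff_space T) :
  (forall s : M -> T -> R, is_CT_state_morphism T M s ->
     (is_maximal_ideal M (Ker_fun T M s) <->
      exists s0 : M -> R, is_state_morphism M s0 /\
        forall x, s x = (fun _ => s0 x))) /\
  (forall s : M -> T -> R, is_CbT_state_morphism T M s ->
     (is_maximal_ideal M (Ker_fun T M s) <->
      exists s0 : M -> R, is_state_morphism M s0 /\
        forall x, s x = (fun _ => s0 x))).
Proof.
  split; intros s Hs; eapply main_gen; eauto.
Qed.
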